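(* Consider the contextual bandit problem with finite policy class $\Theta$ and $K$ actions. For any sequence $(x_1,\boldsymbol{c}_1),\ldots,(x_T,\boldsymbol{c}_T)$, EXP4 with its learning rate $\eta'$ tuned appropriately as a function of $T,K,|\Theta|$ and the given range bound $\rho_T$ is $\big(\tfrac12,\mathcal{O}(\sqrt{KT\ln|\Theta|})\big)$-weakly-stable.
   Context: Contextual bandits: on each round $t=1,\ldots,T$ a context $x_t$ is revealed, the learner picks a policy $\theta_t\in\Theta$, each policy being a map $\theta:\mathcal{X}\to[K]$, and the loss is $f_t(\theta,x)=c_{t,\theta(x)}$ for $\boldsymbol{c}_t\in[0,1]^K$; the learner observes only $f_t(\theta_t,x_t)$. Regret w.r.t. $\Theta$: $\sup_{\theta\in\Theta}\mathbb{E}[\sum_t f_t(\theta_t,x_t)-f_t(\theta,x_t)]$. Induced environment: given the environment $\mathcal{E}$ producing the fixed sequence, an environment $\mathcal{E}'$ induced by importance weighting acts on each round $t$: picks an arbitrary $p_t\in[0,1]$ (possibly history dependent), reveals $x_t$, the learner picks $\theta_t$, and with probability $p_t$ the loss function becomes $f'_t=f_t/p_t$, otherwise $f'_t\equiv0$; the learner observes $f'_t(\theta_t,x_t)$. Weak stability: for $\alpha\in(0,1]$ and non-decreasing $\mathcal{R}$, an algorithm that receives a number $\rho_T$ ahead of time is $(\alpha,\mathcal{R})$-weakly-stable with respect to $\mathcal{E}$ if its regret under $\mathcal{E}$ is $\mathcal{R}(T)$ and under every induced $\mathcal{E}'$ with $\rho_T\ge\max_t1/p_t$, $\sup_{\theta\in\Theta}\mathbb{E}[\sum_t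 f'_t(\theta_t,x_t)-f'_t(\theta,x_t)]\le\rho_T^\alpha\mathcal{R}(T)$. EXP4 with learning rate $\eta'>0$: weights $w_1$ uniform on $\Theta$; on round $t$ sample $\theta_t\sim w_t$, let $q_t(a)=\sum_{\theta:\theta(x_t)=a}w_t(\theta)$, observe loss $\ell_t$, set $\hat c_t(a)=\ell_t\mathbf{1}\{\theta_t(x_t)=a\}/q_t(a)$ for $a\in[K]$, and update $w_{t+1}(\theta)\propto w_t(\theta)\exp(-\eta'\hat c_t(\theta(x_t)))$. *)

(* Defs.v *)
From HB Require Import structures.
From mathcomp Require Import all_boot all_order all_algebra.
From mathcomp Require Import all_classical all_reals.
From mathcomp Require Import all_analysis.
Set Implicit Arguments. Unset Strict Implicit. Unset Printing Implicit Defensive.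
Import Order.TTheory GRing.Theory Num.Theory.
Local Open Scope ring_scope.

(* Rounds are indexed 0,...,T-1.  A history is the list of
   (chosen policy, coin outcome) pairs of past rounds, MOST RECENT FIRST;
   the round index of the current round is [size h].  The coin outcome
   [true] means "with probability p_t the loss becomes f_t/p_t". *)

Section Exp4.
Variables (R : realType) (X : Type) (Theta : finType) (K : nat).
Variable pol : Theta -> X -> 'I_K.
Variable x : nat -> X.
Variable c : nat -> 'I_K -> R.
Variable p : seq (Theta * bool) -> R.
Variable eta : R.

Definition obs_loss (h : seq (Theta * bool)) (th : Theta) (b : bool) : R :=
  if b then c (size h) (pol th (x (size h))) / p h else 0.

Definition qprob (w : Theta -> R) (s : nat) (a : 'I_K) : R :=
  (\sum_(th : Theta | pol th (x s) == a) w th) / (\sum_(th : Theta) w th).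

Fixpoint exp4w (h : seq (Theta * bool)) : Theta -> R :=
  match h with
  | [::] => fun _ => 1
  | (tht, b) :: h' =>
      let w := exp4w h' in
      let s := size h' in
      let a := pol tht (x s) in
      let l := obs_loss h' tht b in
      let chat : 'I_K -> R :=
        fun a' => if a' == a then l / qprob w s a else 0 in
      fun th => w th * expR (- (eta * chat (pol th (x s))))
  end.

Definition exp4dist (h : seq (Theta * bool)) (th : Theta) : R :=
  exp4w h th / \sum_(th' : Theta) exp4w h th'.

(* expected remaining regret against the comparator [ths], over n more
   rounds, starting from history h:
   E[ sum_t f'_t(theta_t,x_t) - f'_t(ths,x_t) ] *)
Fixpoint exp_regret (ths : Theta) (n : nat) (h : seq (Theta * bool)) : R :=
  match n with
  | 0 => 0
  | n'.+1 =>
      let s := size h in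
      \sum_(th : Theta) exp4dist h th *
        (p h * ((c s (pol th (x s)) - c s (pol ths (x s))) / p h
                + exp_regret ths n' ((th, true) :: h))
         + (1 - p h) * exp_regret ths n' ((th, false) :: h))
  end.

Definition exp4_regret (T : nat) (ths : Theta) : R := exp_regret ths T [::].

End Exp4.

(* Main.v *)
Require Import Defs.
From HB Require Import structures.
From mathcomp Require Import all_boot all_order all_algebra.
From mathcomp Require Import all_classical all_reals.
From mathcomp Require Import all_analysis.
From mathcomp Require Import ring lra.
Import Order.TTheory GRing.Theory Num.Theory.
Local Open Scope ring_scope.

Section Aux.
Variable R : realType.

Lemma expRN_le (y : R) : 0 <= y -> expR (- y) <= 1 - y + y ^+ 2.
Proof.
move=> y0; rewrite expRN.
have h1 : (expR y)^-1 <= (1 + y)^-1.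
  by rewrite lef_pV2 ?posrE ?expR_gt0 ?expR_ge1Dx //; lra.
apply: (le_trans h1).
rewrite -[X in X <= _]mul1r ler_pdivrMr; last by lra.
have : 0 <= y ^+ 3 by rewrite exprn_ge0.
rewrite !exprS expr0; nra.
Qed.

Variable Theta : finType.

Lemma abstract_step (eta : R) (w g : Theta -> R) (t0 : Theta) :
  0 < eta -> (forall i, 0 < w i) -> (forall i, 0 <= g i) ->
  ln ((\sum_i w i * expR (- (eta * g i))) / (w t0 * expR (- (eta * g t0)))) / eta
  <= ln ((\sum_i w i) / w t0) / eta - \sum_i (w i / \sum_j w j) * g i + g t0
     + eta * \sum_i (w i / \sum_j w j) * g i ^+ 2.
Proof.
move=> eta0 wpos gnn.
set S := \sum_j w j.
have S0 : 0 < S.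
  rewrite /S (bigD1 t0) //=; apply: ltr_pwDl => //.
  by apply: sumr_ge0 => i _; apply: ltW.
set E := \sum_i (w i / S) * expR (- (eta * g i)).
have hSE : \sum_i w i * expR (- (eta * g i)) = S * E.
  rewrite /E mulr_sumr; apply: eq_bigr => i _.
  by rewrite mulrA mulrCA divff ?mulr1 // gt_eqF.
have E0 : 0 < E.
  rewrite /E (bigD1 t0) //=; apply: ltr_pwDl.
    by rewrite mulr_gt0 ?divr_gt0 ?expR_gt0.
  by apply: sumr_ge0 => i _; rewrite mulr_ge0 ?divr_ge0 ?expR_ge0 // ltW.
have wt0 := wpos t0.
rewrite hSE.
have -> : S * E / (w t0 * expR (- (eta * g t0))) = (S / w t0) * (E * expR (eta * g t0)).
  rewrite expRN; field; rewrite ?gt_eqF ?expR_gt0 ?andbT //.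
rewrite lnM ?posrE ?divr_gt0 ?mulr_gt0 ?expR_gt0 //.
rewrite [ln (E * _)]lnM ?posrE ?expR_gt0 // expRK.
have lnE : ln E <= E - 1.
  have := @le_ln1Dx R (E - 1); rewrite addrCA subrr addr0; apply; lra.
have hE : E - 1 <= \sum_i (w i / S) * (- (eta * g i) + (eta * g i) ^+ 2).
  have -> : E - 1 = \sum_i (w i / S) * (expR (- (eta * g i)) - 1).
    rewrite /E -[1 in LHS](@divff _ S) ?gt_eqF // /S mulr_suml -sumrB.
    by apply: eq_bigr => i _; rewrite mulrBr mulr1.
  apply: ler_sum => i _.
  have hi := @expRN_le (eta * g i) (mulr_ge0 (ltW eta0) (gnn i)).
  have hd : 0 <= w i / S by rewrite divr_ge0 // ltW.
  apply: ler_wpM2l => //; lra.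
have hE2 : \sum_i (w i / S) * (- (eta * g i) + (eta * g i) ^+ 2)
   = - eta * \sum_i (w i / S) * g i + eta ^+ 2 * \sum_i (w i / S) * g i ^+ 2.
  rewrite !mulr_sumr -big_split /=; apply: eq_bigr => i _; ring.
rewrite hE2 in hE.
rewrite ler_pdivrMr //.
set A := \sum_i (w i / S) * g i; set B := \sum_i (w i / S) * g i ^+ 2.
set L := ln (S / w t0).
have -> : (L / eta - A + g t0 + eta * B) * eta = L - eta * A + eta * g t0 + eta ^+ 2 * B.
  by field; rewrite gt_eqF.
move: lnE hE; rewrite -/A -/B; set lE := ln E; lra.
Qed.

Variables (X : Type) (K : nat).
Variables (pol : Theta -> X -> 'I_K) (x : nat -> X) (c : nat -> 'I_K -> R)
  (p : seq (Theta * bool) -> R) (eta rho : R) (ths : Theta).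
Hypotheses (eta0 : 0 < eta) (hc : forall t a, 0 <= c t a <= 1)
  (hp : forall h, 0 < p h <= 1 /\ (p h)^-1 <= rho).

Local Notation W := (exp4w pol x c p eta).
Local Notation d := (exp4dist pol x c p eta).

Lemma W_gt0 h th : 0 < W h th.
Proof.
elim: h th => [|[th' b] h IH] th /=; first exact: ltr01.
by rewrite mulr_gt0 // expR_gt0.
Qed.

Lemma S_gt0 h : 0 < \sum_th W h th.
Proof.
rewrite (bigD1 ths) //=; apply: ltr_pwDl; first exact: W_gt0.
by apply: sumr_ge0 => i _; apply: ltW; apply: W_gt0.
Qed.

Lemma d_gt0 h th : 0 < d h th.
Proof. by rewrite /exp4dist divr_gt0 ?W_gt0 ?S_gt0. Qed.

Lemma sum_d h : \sum_th d h th = 1.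
Proof. by rewrite /exp4dist -mulr_suml divff // gt_eqF // S_gt0. Qed.

Lemma q_eq h s a : qprob pol x (W h) s a = \sum_(th | pol th (x s) == a) d h th.
Proof. by rewrite /qprob mulr_suml. Qed.

Lemma sum_if h s a v :
  \sum_th d h th * (if pol th (x s) == a then v else 0)
  = qprob pol x (W h) s a * v.
Proof.
rewrite q_eq mulr_suml [RHS]big_mkcond /=; apply: eq_bigr => i _.
by case: ifP; rewrite ?mulr0 ?mul0r.
Qed.

Definition Psi h := ln ((\sum_th W h th) / W h ths) / eta.

Lemma Psi_ge0 h : 0 <= Psi h.
Proof.
rewrite /Psi divr_ge0 ?(ltW eta0) // ln_ge0 //.
rewrite ler_pdivlMr ?W_gt0 // mul1r (bigD1 ths) //= lerDl.
by apply: sumr_ge0 => i _; apply: ltW; apply: W_gt0.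
Qed.

Lemma W_false h th : W ((th, false) :: h) =1 W h.
Proof.
move=> t /=; rewrite /obs_loss /= !mul0r if_same mulr0 oppr0 expR0 mulr1 //.
Qed.

Lemma Psi_false h th : Psi ((th, false) :: h) = Psi h.
Proof.
by rewrite /Psi (eq_bigr _ (fun i _ => W_false h th i)) W_false.
Qed.

Definition gf h th t :=
  if pol t (x (size h)) == pol th (x (size h))
  then (c (size h) (pol th (x (size h))) / p h)
       / qprob pol x (W h) (size h) (pol th (x (size h))) else 0.

Lemma gf_ge0 h th t : 0 <= gf h th t.
Proof.
rewrite /gf; case: ifP => // _.
have [/andP [hp0 _] _] := hp h.
have := hc (size h) (pol th (x (size h))) => /andP [c0 _].
rewrite divr_ge0 ?divr_ge0 ?(ltW hp0) //; apply: sumr_ge0 => i _; apply: ltW; apply: W_gt0.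
Qed.

Lemma Psi_true h th :
  Psi ((th, true) :: h) <= Psi h - \sum_t d h t * gf h th t + gf h th ths
                           + eta * \sum_t d h t * gf h th t ^+ 2.
Proof.
rewrite /Psi /exp4dist.
exact: (@abstract_step eta (W h) (gf h th) ths eta0 (W_gt0 h) (gf_ge0 h th)).
Qed.

Lemma sum_dq h s :
  \sum_th d h th / qprob pol x (W h) s (pol th (x s)) <= K%:R.
Proof.
rewrite (partition_big (fun th => pol th (x s)) predT) //=.
apply: (le_trans (y := \sum_(a : 'I_K) (1 : R))); last first.
  by rewrite sumr_const card_ord.
apply: ler_sum => a _.
rewrite (eq_bigr (fun th => d h th / qprob pol x (W h) s a)); last first.
  by move=> i /eqP ->.
rewrite -mulr_suml -q_eq.
case: (eqVneq (qprob pol x (W h) s a) 0) => [->|nz]; first by rewrite mul0r ler01.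
by rewrite divff.
Qed.

Lemma q_gt0 h th : 0 < qprob pol x (W h) (size h) (pol th (x (size h))).
Proof.
rewrite q_eq (bigD1 th) //=; apply: ltr_pwDl; first exact: d_gt0.
by apply: sumr_ge0 => i _; apply: ltW; apply: d_gt0.
Qed.

Lemma gf2 h th t : gf h th t ^+ 2 =
  if pol t (x (size h)) == pol th (x (size h))
  then ((c (size h) (pol th (x (size h))) / p h)
       / qprob pol x (W h) (size h) (pol th (x (size h)))) ^+ 2 else 0.
Proof. by rewrite /gf; case: ifP => _; rewrite ?expr0n. Qed.

Lemma main n h :
  exp_regret pol x c p eta ths n h <= Psi h + n%:R * (eta * (K%:R * rho)).
Proof.
elim: n h => [|n IH] h /=; first by rewrite mul0r addr0 Psi_ge0.
set s := size h; set P := p h; set B := eta * (K%:R * rho).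
have [/andP [P0 P1] Prho] := hp h.
set cs := c s (pol ths (x s)).
pose qq th := qprob pol x (W h) s (pol th (x s)).
pose T th := (c s (pol th (x s)) - cs)
   + P * (Psi h - \sum_t d h t * gf h th t + gf h th ths
          + eta * \sum_t d h t * gf h th t ^+ 2)
   + (1 - P) * Psi h + n%:R * B.
apply: (le_trans (y := \sum_th d h th * T th)).
  apply: ler_sum => th _; apply: ler_wpM2l; first exact/ltW/d_gt0.
  have h1 := IH ((th, true) :: h); have h2 := IH ((th, false) :: h).
  rewrite Psi_false in h2.
  have h3 := Psi_true h th.
  rewrite /T.
  set R1 := exp_regret _ _ _ _ _ _ _ ((th, true) :: h) in h1 *.
  set R2 := exp_regret _ _ _ _ _ _ _ ((th, false) :: h) in h2 *.
  set St := Psi h - _ + _ + _ in h3 *.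
  have e1 : P * ((c s (pol th (x s)) - cs) / P + R1)
            = (c s (pol th (x s)) - cs) + P * R1.
    by field; rewrite gt_eqF.
  rewrite e1.
  have k1 : P * R1 <= P * (St + n%:R * B).
    by apply: ler_wpM2l; [exact: ltW | apply: (le_trans h1); rewrite lerD2r].
  have k2 : (1 - P) * R2 <= (1 - P) * (Psi h + n%:R * B).
    by apply: ler_wpM2l => //; rewrite subr_ge0.
  move: k1 k2; rewrite !mulrDr; lra.
apply: (le_trans (y := \sum_th (d h th * (Psi h + n%:R * B)
          + (d h th * (P * gf h th ths) - d h th * cs)
          + eta * rho * (d h th / qq th)))).
  apply: ler_sum => th _.
  have dp := d_gt0 h th; have qp := q_gt0 h th.
  rewrite /T sum_if.
  rewrite (eq_bigr (fun t => d h t * (if pol t (x s) == pol th (x s) then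
     ((c s (pol th (x s)) / P) / qq th) ^+ 2 else 0))); last first.
    by move=> t _; rewrite gf2.
  rewrite sum_if -/(qq th).
  have PA : P * (qq th * (c s (pol th (x s)) / P / qq th)) = c s (pol th (x s)).
    by field; rewrite !gt_eqF.
  have PV : P * (qq th * (c s (pol th (x s)) / P / qq th) ^+ 2) <= rho / qq th.
    have -> : P * (qq th * (c s (pol th (x s)) / P / qq th) ^+ 2)
              = (c s (pol th (x s)) ^+ 2) * (P^-1 / qq th).
      by field; rewrite !gt_eqF.
    have := hc s (pol th (x s)) => /andP [c0 c1].
    apply: (le_trans (y := P^-1 / qq th)).
      rewrite ler_piMl //; first by apply: divr_ge0; [rewrite invr_ge0 ltW | exact: ltW].
      by rewrite expr_le1.
    by rewrite ler_pM2r ?invr_gt0.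
  have e : d h th * (eta * rho * (1 / qq th)) = eta * rho * (d h th / qq th).
    by rewrite mul1r mulrCA.
  rewrite -e.
  set A := qq th * _ in PA; set V := qq th * _ in PV.
  set G := gf h th ths.
  have PV' : eta * (P * V) <= eta * (rho * (1 / qq th)).
    by rewrite mul1r; apply: ler_wpM2l => //; apply: ltW.
  rewrite -!mulrBr -!mulrDr; apply: ler_wpM2l; first exact: ltW.
  move: PA PV'; rewrite -/s -/P -/A -/V; lra.
rewrite big_split /= big_split /= sumrB.
rewrite -mulr_suml sum_d mul1r -mulr_suml sum_d mul1r.
have -> : \sum_th d h th * (P * gf h th ths) = cs.
  rewrite (eq_bigr (fun th => d h th * (if pol th (x s) == pol ths (x s)
            then cs / qprob pol x (W h) s (pol ths (x s)) else 0))).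
    rewrite (sum_if h s (pol ths (x s))); field; apply/negbT/gt_eqF; exact: q_gt0.
  move=> th _; congr (_ * _); rewrite /gf -/s.
  rewrite eq_sym; case: eqP => [e|_]; last by rewrite mulr0.
  rewrite e -/cs -/P mulrA mulrCA divff ?mulr1 //; apply/negbT/gt_eqF => //.
rewrite subrr addr0 -mulr_sumr.
have := sum_dq h s; rewrite -/s => hK.
have rho0 : 0 <= rho by apply: le_trans Prho; rewrite invr_ge0 ltW.
have : eta * rho * \sum_th d h th / qq th <= eta * rho * K%:R.
  by apply: ler_wpM2l => //; rewrite mulr_ge0 // ltW.
rewrite -addn1 natrD mulrDl mul1r /B; lra.
Qed.

Lemma regret_one (h1 : forall t : Theta, t = ths) n h :
  exp_regret pol x c p eta ths n h = 0.
Proof.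
elim: n h => // n IH h /=; apply: big1 => th _.
by rewrite (h1 th) subrr mul0r !IH; ring.
Qed.

End Aux.

Theorem lemma6 :
  forall R : realType,
  exists C : R, 0 <= C /\
  exists tune : nat -> nat -> nat -> R -> R,
    (forall T K N rho, 0 < tune T K N rho) /\
    forall (X : Type) (Theta : finType) (K T : nat)
           (pol : Theta -> X -> 'I_K) (x : nat -> X) (c : nat -> 'I_K -> R),
      injective pol ->
      (0 < #|Theta|)%N ->
      (forall t a, 0 <= c t a <= 1) ->
      forall (rho : R) (p : seq (Theta * bool) -> R),
        (forall h, 0 < p h <= 1 /\ (p h)^-1 <= rho) ->
        forall ths : Theta,
          exp4_regret pol x c p (tune T K #|Theta| rho) T ths
          <= Num.sqrt rho *
             (C * Num.sqrt (K%:R * T%:R * ln (#|Theta|%:R : R))).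
Proof.
move=> R; exists 2; split; first by [].
exists (fun T K N rho => if (0 < ln (N%:R : R)) && (0 < K%:R * T%:R * rho)
                         then Num.sqrt (ln (N%:R : R) / (K%:R * T%:R * rho)) else 1).
split.
  move=> T K N rho; case: ifP => [/andP [h1 h2]|_]; last exact: ltr01.
  by rewrite sqrtr_gt0 divr_gt0.
move=> X Theta K T pol x c _ hN hc rho p hp ths.
have rhs0 : 0 <= Num.sqrt rho * (2 * Num.sqrt (K%:R * T%:R * ln (#|Theta|%:R : R))).
  by rewrite mulr_ge0 ?sqrtr_ge0 // mulr_ge0 ?sqrtr_ge0.
move: rhs0; case: T => [|T] rhs0; first by rewrite /exp4_regret /=.
case: (leqP #|Theta| 1) => hN1.
  have h1 : forall t : Theta, t = ths.
    by move=> t; have /fintype_le1P := hN1; move=> /(_ ths) ->.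
  by rewrite /exp4_regret regret_one.
move: rhs0; case: K pol c hc => [|K] pol c hc rhs0.
  by case: (pol ths (x 0%N)).
have [/andP [p0 p1] prho] := hp [::].
have rho1 : 1 <= rho by apply: le_trans prho; rewrite invf_ge1.
set N := #|Theta| in hN1 *.
set L := ln (N%:R : R).
set M := K.+1%:R * T.+1%:R * rho.
have L0 : 0 < L by rewrite /L ln_gt0 // ltr1n.
have M0 : 0 < M by rewrite /M !mulr_gt0 // (lt_le_trans ltr01 rho1).
rewrite L0 M0 /=.
set eta := Num.sqrt (L / M).
set u := Num.sqrt L; set v := Num.sqrt M.
have u0 : 0 < u by rewrite sqrtr_gt0.
have v0 : 0 < v by rewrite sqrtr_gt0.
have ee : eta = u / v by rewrite /eta sqrtrM ?sqrtrV ?ltW.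
have eta0 : 0 < eta by rewrite ee divr_gt0.
have hm := @main R Theta X K.+1 pol x c p eta rho ths eta0 hc hp T.+1 [::].
rewrite /exp4_regret; apply: (le_trans hm).
have -> : Psi R Theta X K.+1 pol x c p eta ths [::] = L / eta.
  rewrite /Psi /= sumr_const divr1 //.
have -> : Num.sqrt rho * (2 * Num.sqrt (K.+1%:R * T.+1%:R * L)) = 2 * (u * v).
  rewrite mulrCA -sqrtrM ?(le_trans ler01 rho1) // /u /v -sqrtrM ?ltW //.
  by congr (_ * Num.sqrt _); rewrite /M; ring.
have Lu : L = u ^+ 2 by rewrite sqr_sqrtr // ltW.
have Mv : M = v ^+ 2 by rewrite sqr_sqrtr // ltW.
have -> : T.+1%:R * (eta * (K.+1%:R * rho)) = eta * M by rewrite /M; ring.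
rewrite ee Lu Mv.
have -> : u ^+ 2 / (u / v) + (u / v) * v ^+ 2 = 2 * (u * v).
  by field; rewrite !gt_eqF.
by [].
Qed.
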